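(* Let $\alpha>0$, $\beta>0$, $D>0$, $W\ge0$ and $T\ge W+1$. Let $X=[-D/2,D/2]$ and $x_0=0$, and let $0<\nu\le D$. Let $\theta_1=\dots=\theta_W=0$, let $\theta_{W+1}$ satisfy $\mathbb P(\theta_{W+1}=\nu/2)=\mathbb P(\theta_{W+1}=-\nu/2)=1/2$, and let $\theta_t=\theta_{W+1}$ for $W+2\le t\le T$. Let $f_t(x)=\frac\alpha2(x-\theta_t)^2$ and $x^*=\arg\min_{x\in X^T}\sum_{t=1}^T\big(f_t(x_t)+\frac\beta2(x_t-x_{t-1})^2\big)$. Then for any online deterministic algorithm $\mathcal A$ with prediction window $W$, $$\mathbb E|x_1^{\mathcal A}-x_1^*|^2\ge\frac{a_{1,1+W}^2\nu^2}{4},$$ where $a_{1,1+W}$ is the $(1,1+W)$ entry of $A=H^{-1}$.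
   Context: Online deterministic algorithm with prediction window $W$: $x_t^{\mathcal A}=\mathcal A_t(I_t)$, where $\mathcal A_t$ is deterministic and $I_t$ consists of fixed initial knowledge together with $f_1,\dots,f_{\min(t+W-1,T)}$. In particular, $x_1^{\mathcal A}$ depends only on $\theta_1,\dots,\theta_W$. $H\in\mathbb R^{T\times T}$ is the symmetric tridiagonal matrix with diagonal entries $1+2\beta/\alpha$ (the last one being $1+\beta/\alpha$) and off-diagonal entries $-\beta/\alpha$. It satisfies $x^*=H^{-1}\theta$. *)

(* Defs.v *)
From HB Require Import structures.
From mathcomp Require Import all_boot all_order all_algebra.
From mathcomp Require Import reals.
Set Implicit Arguments. Unset Strict Implicit. Unset Printing Implicit Defensive.
Import Order.TTheory GRing.Theory Num.Theory.
Local Open Scope ring_scope.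

Section Defs.
Variable R : realType.

(* Trajectories are indexed by nat; x 0 is the initial point x_0, and
   x 1, ..., x T are the decisions. *)

Definition feasible (D : R) (T : nat) (x : nat -> R) : Prop :=
  forall t : nat, (1 <= t <= T)%N -> - (D / 2) <= x t <= D / 2.

Definition total_cost (alpha beta : R) (T : nat) (theta x : nat -> R) : R :=
  \sum_(1 <= t < T.+1)
     (alpha / 2 * (x t - theta t) ^+ 2 + beta / 2 * (x t - x t.-1) ^+ 2).

Definition is_offline_opt (alpha beta D : R) (T : nat) (theta x : nat -> R)
  : Prop :=
  x 0%N = 0 /\ feasible D T x /\
  forall y : nat -> R, y 0%N = 0 -> feasible D T y ->
    total_cost alpha beta T theta x <= total_cost alpha beta T theta y.

Definition stage_fun (alpha : R) (theta : nat -> R) : nat -> R -> R :=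
  fun t x => alpha / 2 * (x - theta t) ^+ 2.

(* An online deterministic algorithm with prediction window W: the decision
   at time t is a deterministic function alg t of the sequence of cost
   functions (the fixed initial knowledge, i.e. the problem parameters, is
   implicit in alg), which may only depend on f_1, ..., f_{min(t+W-1, T)}. *)
Definition online_with_window (W T : nat)
  (alg : nat -> (nat -> R -> R) -> R) : Prop :=
  forall (t : nat) (F G : nat -> R -> R),
    (forall s : nat, (1 <= s <= minn (t + W - 1) T)%N -> F s = G s) ->
    alg t F = alg t G.

(* The instance: theta_1 = ... = theta_W = 0 and theta_t = s * nu/2 for
   W+1 <= t <= T, where s = +1 or -1 is the random sign. *)
Definition theta_inst (W : nat) (nu s : R) : nat -> R :=
  fun t => if (t <= W)%N then 0 else s * (nu / 2).

(* The T x T tridiagonal matrix H (0-indexed rows/columns). *)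
Definition Hmat (alpha beta : R) (T : nat) : 'M[R]_T :=
  \matrix_(i < T, j < T)
    (if (i : nat) == j then
       (if i.+1 == T then 1 + beta / alpha else 1 + 2 * (beta / alpha))
     else if (i.+1 == j) || (j.+1 == i) then - (beta / alpha) else 0).

End Defs.

(* Entry of a square matrix at 0-based nat indices (0 if out of range). *)
Definition mxnat (R : pzRingType) (n : nat) (A : 'M[R]_n) (i j : nat) : R :=
  match @insub _ (fun k => (k < n)%N) 'I_n i,
        @insub _ (fun k => (k < n)%N) 'I_n j with
  | Some k, Some l => A k l
  | _, _ => 0
  end.

(* Main.v *)
Require Import Defs.
From HB Require Import structures.
From mathcomp Require Import all_boot all_order all_algebra.
From mathcomp Require Import reals.
From mathcomp Require Import ring lra zify.
Import Order.TTheory GRing.Theory Num.Theory.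
Local Open Scope ring_scope.

Definition gfun {R : realType} (alpha beta : R) (theta z : nat -> R) (t : nat) : R :=
  alpha * (z t - theta t) + beta * (z t - z t.-1) - beta * (z t.+1 - z t).

Definition recs {R : realType} (alpha beta : R) (T : nat) (theta z : nat -> R) : Prop :=
  z 0%N = 0 /\ z T.+1 = z T /\
  forall t, (1 <= t <= T)%N -> gfun alpha beta theta z t = 0.

Lemma sbp {R : realType} (d z : nat -> R) (T : nat) : d 0%N = 0 ->
  \sum_(1 <= t < T.+1) (d t - d t.-1) * (z t - z t.-1) =
  \sum_(1 <= t < T.+1) d t * ((z t - z t.-1) - (z t.+1 - z t)) + d T * (z T.+1 - z T).
Proof.
move=> d0; elim: T => [|T IH].
  rewrite !big_geq // d0 mul0r addr0. by [].
rewrite big_nat_recr // IH [in RHS]big_nat_recr //=.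
ring.
Qed.

Lemma cost_diff {R : realType} (alpha beta : R) (T : nat) (theta y z : nat -> R) :
  y 0%N = 0 -> z 0%N = 0 -> z T.+1 = z T ->
  total_cost alpha beta T theta y - total_cost alpha beta T theta z =
  \sum_(1 <= t < T.+1) (alpha / 2 * (y t - z t) ^+ 2
       + beta / 2 * ((y t - z t) - (y t.-1 - z t.-1)) ^+ 2)
  + \sum_(1 <= t < T.+1) (y t - z t) * gfun alpha beta theta z t.
Proof.
move=> y0 z0 zT.
have d0 : (fun t => y t - z t) 0%N = 0 by rewrite /= y0 z0 subr0.
have := @sbp R (fun t => y t - z t) z T d0 => /= E.
rewrite /total_cost -sumrB.
have -> : \sum_(1 <= t < T.+1) (y t - z t) * gfun alpha beta theta z t =
  \sum_(1 <= t < T.+1) alpha * ((y t - z t) * (z t - theta t))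
  + beta * \sum_(1 <= t < T.+1) (y t - z t) * ((z t - z t.-1) - (z t.+1 - z t)).
  rewrite mulr_sumr -big_split /=; apply: eq_bigr => t _; rewrite /gfun; ring.
rewrite zT subrr mulr0 addr0 in E.
rewrite -E mulr_sumr -!big_split /=; apply: eq_bigr => t _.
have h : (2:R) != 0 by rewrite pnatr_eq0.
field.
by [].
Qed.

Lemma rec_min {R : realType} (alpha beta : R) (T : nat) (theta y z : nat -> R) :
  0 < alpha -> 0 < beta ->
  recs alpha beta T theta z -> y 0%N = 0 ->
  forall t, (1 <= t <= T)%N ->
  alpha / 2 * (y t - z t) ^+ 2 <=
  total_cost alpha beta T theta y - total_cost alpha beta T theta z.
Proof.
move=> ha hb [z0 [zT hg]] y0 t ht.
rewrite cost_diff //.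
have -> : \sum_(1 <= t < T.+1) (y t - z t) * gfun alpha beta theta z t = 0.
  rewrite (eq_big_nat _ _ (F2 := fun _ => 0)) ?big1_eq // => i hi.
  by rewrite hg ?mulr0.
rewrite addr0 (bigD1_seq t) /=; last by rewrite iota_uniq.
  2: by rewrite mem_index_iota.
rewrite -[X in X <= _]addr0 lerD //.
  rewrite lerDl; apply: mulr_ge0; last exact: sqr_ge0.
  by apply: divr_ge0 => //; apply: ltW.
apply: sumr_ge0 => i _; apply: addr_ge0; apply: mulr_ge0; try exact: sqr_ge0;
  by apply: divr_ge0 => //; apply: ltW.
Qed.

Lemma sq0 {R : realType} (c a : R) : 0 < c -> c * a ^+ 2 <= 0 -> a = 0.
Proof.
move=> hc h.
have : a ^+ 2 <= 0 by rewrite -(pmulr_rle0 _ hc).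
by rewrite le_eqVlt sqrf_eq0 ltNge sqr_ge0 orbF => /eqP.
Qed.

Lemma rec_unique {R : realType} (alpha beta : R) (T : nat) (theta z1 z2 : nat -> R) :
  0 < alpha -> 0 < beta ->
  recs alpha beta T theta z1 -> recs alpha beta T theta z2 ->
  forall t, (1 <= t <= T)%N -> z1 t = z2 t.
Proof.
move=> ha hb h1 h2 t ht.
have e1 := rec_min _ _ _ _ _ _ ha hb h1 (proj1 h2) t ht.
have e2 := rec_min _ _ _ _ _ _ ha hb h2 (proj1 h1) t ht.
apply/eqP; rewrite -subr_eq0; apply/eqP.
apply: (@sq0 _ (alpha / 2)); first by rewrite divr_gt0.
have : (z1 t - z2 t) ^+ 2 = (z2 t - z1 t) ^+ 2 by rewrite -sqrrN opprB.
move=> E; rewrite E in e2 *; lra.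
Qed.

Lemma rec_opt {R : realType} (alpha beta D : R) (T : nat) (theta x z : nat -> R) :
  0 < alpha -> 0 < beta ->
  recs alpha beta T theta z -> feasible D T z ->
  is_offline_opt alpha beta D T theta x ->
  forall t, (1 <= t <= T)%N -> x t = z t.
Proof.
move=> ha hb hz fz [x0 [fx hx]] t ht.
have e1 := rec_min _ _ _ _ _ _ ha hb hz x0 t ht.
have e2 := hx z (proj1 hz) fz.
apply/eqP; rewrite -subr_eq0; apply/eqP.
apply: (@sq0 _ (alpha / 2)); first by rewrite divr_gt0.
lra.
Qed.

Lemma rec_proj {R : realType} (alpha beta : R) (T : nat) (theta z : nat -> R)
  (p : R -> R) :
  0 < alpha -> 0 < beta ->
  recs alpha beta T theta z -> p 0 = 0 ->
  (forall a b, (p a - p b) ^+ 2 <= (a - b) ^+ 2) ->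
  (forall t a, (1 <= t <= T)%N -> (p a - theta t) ^+ 2 <= (a - theta t) ^+ 2) ->
  forall t, (1 <= t <= T)%N -> p (z t) = z t.
Proof.
move=> ha hb hz p0 hL hT t ht.
have y0 : (fun s => p (z s)) 0%N = 0 by rewrite /= (proj1 hz) p0.
have e1 := rec_min _ _ _ _ (fun s => p (z s)) _ ha hb hz y0 t ht.
have e2 : total_cost alpha beta T theta (fun s => p (z s)) <=
          total_cost alpha beta T theta z.
  apply: ler_sum_nat => i hi; apply: lerD; apply: ler_wpM2l.
  - by apply: divr_ge0 => //; apply: ltW.
  - exact: hT.
  - by apply: divr_ge0 => //; apply: ltW.
  - exact: hL.
apply/eqP; rewrite -subr_eq0; apply/eqP.
apply: (@sq0 _ (alpha / 2)); first by rewrite divr_gt0.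
simpl in e1; lra.
Qed.

Lemma rec_lin {R : realType} (alpha beta k : R) (T : nat) (th1 th2 z1 z2 : nat -> R) :
  recs alpha beta T th1 z1 -> recs alpha beta T th2 z2 ->
  recs alpha beta T (fun t => th1 t + k * th2 t) (fun t => z1 t + k * z2 t).
Proof.
move=> [a1 [b1 c1]] [a2 [b2 c2]]; split; first by rewrite a1 a2 mulr0 addr0.
split; first by rewrite b1 b2.
move=> t ht; transitivity (gfun alpha beta th1 z1 t + k * gfun alpha beta th2 z2 t).
  rewrite /gfun; ring.
by rewrite c1 // c2 // mulr0 addr0.
Qed.

Definition wn {R : realType} {n : nat} (w : 'cV[R]_n.+1) : nat -> R :=
  fun t => if t == 0%N then 0 else w (inord (minn t n.+1).-1) 0.

Lemma wnE {R : realType} (n : nat) (w : 'cV[R]_n.+1) (j : 'I_n.+1) :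
  wn w j.+1 = w j 0.
Proof.
rewrite /wn /=.
have -> : minn j.+1 n.+1 = j.+1 by have := ltn_ord j; lia.
by rewrite /= inord_val.
Qed.

Lemma wn_last {R : realType} (n : nat) (w : 'cV[R]_n.+1) : wn w n.+2 = wn w n.+1.
Proof.
rewrite /wn /=.
have -> : minn n.+2 n.+1 = n.+1 by lia.
by have -> : minn n.+1 n.+1 = n.+1 by lia.
Qed.

Lemma sum_delta {R : realType} (m k : nat) (f : nat -> R) :
  \sum_(j < m) ((j : nat) == k)%:R * f j = (k < m)%:R * f k.
Proof.
elim: m => [|m IH]; first by rewrite big_ord0 ltn0 mul0r.
rewrite big_ord_recr /= IH.
case: (ltngtP k m) => h.
- have -> : (k < m.+1)%N = true by lia.
  by rewrite /= !mulr0n mul0r addr0.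
- have -> : (k < m.+1)%N = false by lia.
  by rewrite /= !mulr0n !mul0r addr0.
- by rewrite h ltnSn /= !mulr0n mul0r add0r.
Qed.

Lemma sum_delta_pred {R : realType} (m k : nat) (f : nat -> R) :
  \sum_(j < m) ((j : nat).+1 == k)%:R * f j = (0 < k <= m)%:R * f k.-1.
Proof.
case: k => [|k].
  by rewrite big1 ?mul0r // => j _; rewrite /= mulr0n mul0r.
by rewrite /= (eq_bigr (fun j : 'I_m => ((j : nat) == k)%:R * f j)) ?sum_delta.
Qed.

Lemma Hrow {R : realType} (alpha beta : R) (n : nat) (w : 'cV[R]_n.+1) (i : 'I_n.+1) :
  (Hmat alpha beta n.+1 *m w) i 0 =
  wn w i.+1 + beta / alpha * (wn w i.+1 - wn w i)
  - beta / alpha * (wn w i.+2 - wn w i.+1).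
Proof.
rewrite mxE.
transitivity (\sum_(j < n.+1) (((j : nat) == i)%:R *
      ((if i.+1 == n.+1 then 1 + beta / alpha else 1 + 2 * (beta / alpha)) * wn w j.+1)
    + ((j : nat) == i.+1)%:R * (- (beta / alpha) * wn w j.+1)
    + ((j : nat).+1 == i)%:R * (- (beta / alpha) * wn w j.+1))).
  apply: eq_bigr => j _; rewrite !mxE wnE.
  case: ifP => /eqP h1.
    have -> : ((j : nat) == i) = true by apply/eqP; lia.
    have -> : ((j : nat) == i.+1) = false by apply/eqP; lia.
    have -> : ((j : nat).+1 == i) = false by apply/eqP; lia.
    rewrite h1 /= ?mulr1n ?mulr0n; ring.
  have -> : ((j : nat) == i) = false by apply/eqP; lia.
  case: ifP => h2.
    case/orP: h2 => /eqP h2.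
      have -> : ((j : nat) == i.+1) = true by apply/eqP; lia.
      have -> : ((j : nat).+1 == i) = false by apply/eqP; lia.
      rewrite /= ?mulr1n ?mulr0n; ring.
    have -> : ((j : nat) == i.+1) = false by apply/eqP; lia.
    have -> : ((j : nat).+1 == i) = true by apply/eqP; lia.
    rewrite /= ?mulr1n ?mulr0n; ring.
  move/negbT: h2; rewrite negb_or => /andP[/eqP h2 /eqP h3].
  have -> : ((j : nat) == i.+1) = false by apply/eqP; lia.
  have -> : ((j : nat).+1 == i) = false by apply/eqP; lia.
  rewrite /= ?mulr1n ?mulr0n; ring.
rewrite !big_split /=.
set c := (if _ then _ else _).
rewrite (@sum_delta _ _ _ (fun j : nat => c * wn w j.+1)).
rewrite (@sum_delta _ _ _ (fun j : nat => - (beta / alpha) * wn w j.+1)).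
rewrite (@sum_delta_pred _ _ _ (fun j : nat => - (beta / alpha) * wn w j.+1)).
rewrite ltn_ord /= mulr1n mul1r.
have -> : (0 < i <= n.+1)%:R * (- (beta / alpha) * wn w i.-1.+1) =
          - (beta / alpha) * wn w i.
  case: (posnP i) => [->|ip]; first by rewrite /wn /= mulr0n mul0r mulr0.
  rewrite (ltnW (ltn_ord i)).
  by rewrite /= mulr1n mul1r prednK.
rewrite /c; case: eqP => hi.
  have -> : (i.+1 < n.+1)%N = false by lia.
  have -> : (i : nat) = n by lia.
  rewrite wn_last /= mulr0n mul0r; ring.
have -> : (i.+1 < n.+1)%N = true by have := ltn_ord i; lia.
rewrite /= mulr1n mul1r; ring.
Qed.

Lemma gfun_H {R : realType} (alpha beta : R) (n : nat) (w : 'cV[R]_n.+1)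
  (theta : nat -> R) (i : 'I_n.+1) : alpha != 0 ->
  gfun alpha beta theta (wn w) i.+1 =
  alpha * ((Hmat alpha beta n.+1 *m w) i 0 - theta i.+1).
Proof. by move=> ha; rewrite Hrow /gfun /=; field. Qed.

Lemma rec_of_H {R : realType} (alpha beta : R) (n : nat) (w : 'cV[R]_n.+1)
  (theta : nat -> R) : alpha != 0 ->
  (forall i : 'I_n.+1, (Hmat alpha beta n.+1 *m w) i 0 = theta i.+1) ->
  recs alpha beta n.+1 theta (wn w).
Proof.
move=> ha h; split; first by [].
split; first exact: wn_last.
move=> t ht.
have -> : t = (@inord n t.-1).+1 by rewrite inordK; lia.
by rewrite gfun_H // h subrr mulr0.
Qed.

Lemma Hsym {R : realType} (alpha beta : R) (T : nat) :
  (Hmat alpha beta T)^T = Hmat alpha beta T.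
Proof.
apply/matrixP => i j; rewrite !mxE.
have [e|ne] := eqVneq (i : nat) j.
  by have -> : i = j := val_inj e.
by rewrite orbC.
Qed.

Lemma Hunit {R : realType} (alpha beta : R) (n : nat) :
  0 < alpha -> 0 < beta -> Hmat alpha beta n.+1 \in unitmx.
Proof.
move=> ha hb.
have ha0 : alpha != 0 by rewrite gt_eqF.
rewrite unitmxE unitfE; apply/negP => /det0P [v vn0 vH].
set w := v^T.
have Hw : Hmat alpha beta n.+1 *m w = 0.
  by rewrite -Hsym -trmx_mul vH trmx0.
have r1 : recs alpha beta n.+1 (fun _ => 0) (wn w).
  by apply: rec_of_H => // i; rewrite Hw mxE.
have r0 : recs alpha beta n.+1 (fun _ => 0) (fun _ => 0).
  split; first by []. split; first by [].
  by move=> t _; rewrite /gfun /=; ring.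
apply: (negP vn0); apply/eqP/matrixP => a i.
rewrite (ord1 a) mxE.
have := @wnE _ _ w i; rewrite /w mxE => <-.
by apply: (rec_unique _ _ _ _ _ _ ha hb r1 r0); have := ltn_ord i; lia.
Qed.

Lemma rec_zsol {R : realType} (alpha beta : R) (n : nat) (theta : nat -> R) :
  0 < alpha -> 0 < beta ->
  recs alpha beta n.+1 theta
    (wn (invmx (Hmat alpha beta n.+1) *m \col_(i < n.+1) theta i.+1)).
Proof.
move=> ha hb; apply: rec_of_H; first by rewrite gt_eqF.
by move=> i; rewrite mulKVmx ?Hunit // mxE.
Qed.

Lemma sq_le {R : realType} (x y : R) :
  (0 <= x /\ x <= y) \/ (y <= x /\ x <= 0) -> x ^+ 2 <= y ^+ 2.
Proof. case=> [[h1 h2]|[h1 h2]]; nra. Qed.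

Definition clip {R : realType} (c a : R) : R :=
  if a < - c then - c else if c < a then c else a.

Lemma clip_props {R : realType} (c : R) : 0 <= c ->
  [/\ clip c 0 = 0,
      (forall a b, (clip c a - clip c b) ^+ 2 <= (a - b) ^+ 2),
      (forall a th, - c <= th <= c -> (clip c a - th) ^+ 2 <= (a - th) ^+ 2) &
      (forall a, - c <= clip c a <= c)].
Proof.
move=> hc; split.
- rewrite /clip; case: ltrP => h1; first lra.
  case: ltrP => h2; first lra. by [].
- move=> a b; rewrite /clip.
  apply: sq_le; case: (lerP a b) => hab; [right|left];
  case: ltrP => h1; try case: ltrP => h2; try case: ltrP => h3; try case: ltrP => h4; split; lra.
- move=> a th /andP[h5 h6]; rewrite /clip.
  case: ltrP => h1; try case: ltrP => h2; nra.
- move=> a; rewrite /clip.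
  case: ltrP => h1; try case: ltrP => h2; apply/andP; split; lra.
Qed.

Definition posp {R : realType} (a : R) : R := if a < 0 then 0 else a.

Lemma posp_props {R : realType} :
  [/\ posp (0 : R) = 0,
      (forall a b : R, (posp a - posp b) ^+ 2 <= (a - b) ^+ 2),
      (forall a th : R, 0 <= th -> (posp a - th) ^+ 2 <= (a - th) ^+ 2) &
      (forall a : R, 0 <= posp a)].
Proof.
split.
- by rewrite /posp ltxx.
- move=> a b; rewrite /posp.
  apply: sq_le; case: (lerP a b) => hab; [right|left];
  case: ltrP => h1; case: ltrP => h2; split; lra.
- move=> a th h; rewrite /posp.
  case: ltrP => h1; nra.
- move=> a; rewrite /posp; case: ltrP => h1; lra.
Qed.

Theorem lemma10 (R : realType) (alpha beta D nu : R) (W T : nat)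
  (halpha : 0 < alpha) (hbeta : 0 < beta) (hD : 0 < D)
  (hT : (W + 1 <= T)%N) (hnu0 : 0 < nu) (hnuD : nu <= D)
  (alg : nat -> (nat -> R -> R) -> R)
  (halg : online_with_window W T alg)
  (xp xm : nat -> R)
  (hxp : is_offline_opt alpha beta D T (theta_inst W nu 1) xp)
  (hxm : is_offline_opt alpha beta D T (theta_inst W nu (-1)) xm) :
  2^-1 * (alg 1%N (stage_fun alpha (theta_inst W nu 1)) - xp 1%N) ^+ 2
  + 2^-1 * (alg 1%N (stage_fun alpha (theta_inst W nu (-1))) - xm 1%N) ^+ 2
  >= (mxnat (invmx (Hmat alpha beta T)) 0 W) ^+ 2 * nu ^+ 2 / 4.
Proof.
case: T hT halg hxp hxm => [|n] hT halg hxp hxm; first by rewrite addn1 in hT.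
have hW : (W < n.+1)%N by rewrite -addn1.
set H := Hmat alpha beta n.+1.
set zs := fun th : nat -> R => wn (invmx H *m \col_(i < n.+1) th i.+1).
have rz : forall th, recs alpha beta n.+1 th (zs th).
  by move=> th; apply: rec_zsol.
set c := nu / 2.
have hc : 0 <= c by rewrite /c; lra.
have bnd : forall th z, recs alpha beta n.+1 th z ->
    (forall t, (1 <= t <= n.+1)%N -> - c <= th t <= c) ->
    forall t, (1 <= t <= n.+1)%N -> - c <= z t <= c.
  move=> th z hz hth t ht.
  have [p0 pL pT pB] := clip_props _ hc.
  rewrite -(rec_proj _ _ _ _ _ _ halpha hbeta hz p0 pL _ t ht) //.
  by move=> s a hs; apply: pT; apply: hth.
have nonneg : forall th z, recs alpha beta n.+1 th z ->
    (forall t, (1 <= t <= n.+1)%N -> 0 <= th t) ->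
    forall t, (1 <= t <= n.+1)%N -> 0 <= z t.
  move=> th z hz hth t ht.
  have [p0 pL pT pB] := @posp_props R.
  rewrite -(rec_proj _ _ _ _ _ _ halpha hbeta hz p0 pL _ t ht) //.
  by move=> s a hs; apply: pT; apply: hth.
have thb : forall s : R, (s = 1 \/ s = -1) ->
    forall t, (1 <= t <= n.+1)%N -> - c <= theta_inst W nu s t <= c.
  move=> s hs t _; case: hs => ->; rewrite /theta_inst; case: ifP => _; apply/andP;
    split; rewrite /c; lra.
have feas : forall s : R, (s = 1 \/ s = -1) -> feasible D n.+1 (zs (theta_inst W nu s)).
  move=> s hs t ht.
  have /andP[h1 h2] := bnd _ _ (rz _) (thb s hs) t ht.
  apply/andP; split; rewrite /c in h1 h2; lra.
have h11 : (1 <= 1 <= n.+1)%N by [].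
have ep : xp 1%N = zs (theta_inst W nu 1) 1%N.
  exact: (rec_opt _ _ _ _ _ _ _ halpha hbeta (rz _) (feas 1 (or_introl erefl)) hxp).
have em : xm 1%N = zs (theta_inst W nu (-1)) 1%N.
  exact: (rec_opt _ _ _ _ _ _ _ halpha hbeta (rz _) (feas (-1) (or_intror erefl)) hxm).
set e := fun t : nat => ((t == W.+1)%N)%:R : R.
have w0 : 0 <= zs (theta_inst W nu 1) 1%N - zs (theta_inst W nu (-1)) 1%N
              - nu * zs e 1%N.
  have r := @rec_lin _ _ _ (-nu) _ _ _ _ _ (@rec_lin _ _ _ (-1) _ _ _ _ _ (rz (theta_inst W nu 1)) (rz (theta_inst W nu (-1)))) (rz e).
  have := nonneg _ _ r _ 1%N h11.
    move=> /= h; (suff : 0 <= zs (theta_inst W nu 1) 1%N + -1 * zs (theta_inst W nu (-1)) 1%N + - nu * zs e 1%N by lra); apply: h.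
  move=> t ht; rewrite /theta_inst /e.
  case: (leqP t W) => h.
    have -> : (t == W.+1) = false by apply/eqP; lia.
    rewrite /= mulr0n; lra.
  case: eqP => h'; rewrite /= ?mulr0n ?mulr1n; lra.
have u0 : 0 <= zs e 1%N.
  apply: (nonneg _ _ (rz e)) => // t _; rewrite /e; case: eqP => _; rewrite /= ?mulr0n ?mulr1n; lra.
have ue : zs e 1%N = mxnat (invmx H) 0 W.
  rewrite /zs /wn /=.
  have -> : minn 1 n.+1 = 1%N by lia.
  rewrite mxE /=.
  transitivity (\sum_(j < n.+1) ((j : nat) == W)%:R *
                   (fun k : nat => invmx H (inord 0) (inord k)) j).
    apply: eq_bigr => j _; rewrite mxE /e /= eqSS inord_val mulrC.
    by [].
  rewrite (@sum_delta _ _ _ (fun k : nat => invmx H (inord 0) (inord k))) hW /= mulr1n mul1r.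
  rewrite /mxnat (insubT (fun k => (k < n.+1)%N) (ltn0Sn n))
                 (insubT (fun k => (k < n.+1)%N) hW) /=.
  by congr (invmx H _ _); apply: val_inj; rewrite /= inordK.
have alg_eq : alg 1%N (stage_fun alpha (theta_inst W nu 1)) =
              alg 1%N (stage_fun alpha (theta_inst W nu (-1))).
  apply: halg => s hs.
  have hsW : (s <= W)%N by move: hs; lia.
  by rewrite /stage_fun /theta_inst hsW.
rewrite alg_eq ep em -ue.
set a := alg _ _; set P := zs (theta_inst W nu 1) 1%N; set M := zs (theta_inst W nu (-1)) 1%N; set u := zs e 1%N.
have h1 : (nu * u) ^+ 2 <= (P - M) ^+ 2.
  apply: sq_le; left; split; [apply: mulr_ge0 => //; exact: ltW | rewrite /P /M /u; lra].
have h2 := sqr_ge0 (2 * a - P - M).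
rewrite exprMn in h1.
nra.
Qed.
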